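(* Let $p$ be a prime and $m\geq 2$ an integer. For real $x$ let $\omega=\frac{x+\sqrt{x^2+4}}{2}$, and let $i=\sqrt{-1}$. (a) If $p=2$ and $2\mid m$, then $\Psi_{2m}(x)=-i^{\varphi(m)}\Psi_m\!\left(i\omega^2-(i\omega^2)^{-1}\right)=-i^{\varphi(m)}\Psi_m(i(x^2+2))$ when $m=2$, and $\Psi_{2m}(x)=i^{\varphi(m)}\Psi_m\!\left(i\omega^2-(i\omega^2)^{-1}\right)=i^{\varphi(m)}\Psi_m(i(x^2+2))$ when $m\geq3$. (b) If $p=2$ and $2\nmid m$, then $\Psi_{2m}(x)=i^{\varphi(m)}\Psi_m\!\left(i\omega-(i\omega)^{-1}\right)=i^{\varphi(m)}\Psi_m\!\left(i\sqrt{x^2+4}\right)$. (c) If $p>2$ and $p\mid m$, then $\Psi_{pm}(x)=\Psi_m(\omega^p-\omega^{-p})=\Psi_m(x\Psi_{2p}(x))$. (d) If $p>2$ and $p\nmid m$, then $\Psi_{pm}(x)=\dfrac{\Psi_m(\omega^p-\omega^{-p})}{\Psi_m(\omega-\omega^{-1})}=\dfrac{\Psi_m(x\Psi_{2p}(x))}{\Psi_m(x)}$.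
   Context: The Fibonacci polynomials are defined by $F_1(x)=1$, $F_2(x)=x$, and $F_n(x)=xF_{n-1}(x)+F_{n-2}(x)$ for $n\geq 3$. For $n\geq 2$, the $n$-th fibotomic polynomial $\Psi_n(x)\in\mathbb{Z}[x]$ is the product of the monic irreducible factors of $F_n(x)$ which are not factors of $F_k(x)$ for any $k<n$; also $\Psi_1(x)=1$. Thus $F_n(x)=\prod_{d\mid n}\Psi_d(x)$ for all $n\geq1$. $\varphi$ is Euler's totient function. *)

(* Defs.v *)
From mathcomp Require Import all_boot all_order all_algebra all_field.
Set Implicit Arguments. Unset Strict Implicit. Unset Printing Implicit Defensive.
Import Order.TTheory GRing.Theory Num.Theory.
Local Open Scope ring_scope.

Fixpoint fibpair (n : nat) : {poly algC} * {poly algC} :=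
  match n with
  | 0%N => (0, 1)
  | k.+1 => let '(a, b) := fibpair k in (b, 'X * b + a)
  end.

Definition fibpoly (n : nat) : {poly algC} := (fibpair n).1.

(* A list of all complex roots of F_n (with multiplicity), from the
   factorisation F_n = lead_coef F_n * prod (X - z) over algC. *)
Definition fibroots (n : nat) : seq algC :=
  sval (closed_field_poly_normal (fibpoly n)).

(* Over algC this is the
   product of the (distinct) monic irreducible factors of F_n in Z[x] which do
   not divide any F_k, k < n. *)
Definition fibotomic (n : nat) : {poly algC} :=
  if n == 1%N then 1 else
  \prod_(z <- undup (fibroots n) | all (fun k => ~~ root (fibpoly k) z) (iota 1 n.-1))
     ('X - z%:P).

(* Main.v *)
Require Import Defs.
From mathcomp Require Import all_boot all_order all_algebra all_field.
From mathcomp Require Import ring zify.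
Set Implicit Arguments. Unset Strict Implicit. Unset Printing Implicit Defensive.
Import Order.TTheory GRing.Theory Num.Theory.
Local Open Scope ring_scope.

Lemma fib_eval (t : algC) k : t != 0 ->
  (fibpair k).1.[t - t^-1] * (t + t^-1) = t ^+ k - (- t^-1) ^+ k /\
  (fibpair k).2.[t - t^-1] * (t + t^-1) = t ^+ k.+1 - (- t^-1) ^+ k.+1.
Proof.
move=> t0; elim: k => [|k [IH1 IH2]].
  by rewrite /= !hornerE expr1 expr0 subrr opprK.
rewrite /=; case: (fibpair k) IH1 IH2 => a b /= IH1 IH2; split => //.
rewrite hornerD hornerM hornerX mulrDl -mulrA IH2 IH1.
set c := - t^-1.
have tc : t * c = -1 by rewrite /c mulrN divff.
rewrite !exprS.
set T := t ^+ k; set C := c ^+ k.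
apply/eqP; rewrite -subr_eq0; apply/eqP.
transitivity ((t * c + 1) * (T - C)); first by ring.
by rewrite tc addNr mul0r.
Qed.

Lemma fib_eval_i (t : algC) k : t ^+ 2 = -1 ->
  (fibpair k).1.[2 * t] * t = k%:R * t ^+ k /\
  (fibpair k).2.[2 * t] * t = k.+1%:R * t ^+ k.+1.
Proof.
move=> t2; elim: k => [|k [IH1 IH2]].
  by rewrite /= !hornerE.
rewrite /=; case: (fibpair k) IH1 IH2 => a b /= IH1 IH2; split => //.
rewrite hornerD hornerM hornerX mulrDl -mulrA IH2 IH1.
rewrite !exprS -!mulrA.
have -> : t * (t * t ^+ k) = - t ^+ k by rewrite mulrA -expr2 t2 mulN1r.
have tt : t * t = -1 by rewrite -expr2.
rewrite -addn2 natrD -!(addn1 k) !natrD.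
transitivity (2 * k%:R * (t * t) * t ^+ k + 2 * (t*t) * t ^+ k + k%:R * t ^+ k); first by ring.
rewrite tt; ring.
Qed.

Lemma fib_root (t : algC) k : t != 0 -> (0 < k)%N ->
  root (fibpoly k) (t - t^-1) = ((- t^+2) != 1) && ((- t^+2) ^+ k == 1).
Proof.
move=> t0 k0; rewrite /fibpoly; case: (eqVneq (t^+2) (-1)) => t2.
  rewrite t2 opprK eqxx /=.
  have ti : t^-1 = - t.
    apply: (mulfI t0); rewrite divff // mulrN -expr2 t2 opprK //.
  rewrite ti opprK -mulr2n -mulr_natl.
  have [H _] := fib_eval_i k t2.
  apply/negP => /rootP H0; move: H; rewrite H0 mul0r => /esym/eqP.
  rewrite mulf_eq0 expf_eq0 (negPf t0) andbF orbF pnatr_eq0.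
  by move/eqP=> k00; rewrite k00 in k0.
have tt0 : t + t^-1 != 0.
  apply/negP => /eqP h; move/negP: t2; apply; apply/eqP.
  have : t * (t + t^-1) = 0 by rewrite h mulr0.
  by rewrite mulrDr divff // expr2 => /eqP; rewrite addr_eq0 => /eqP.
have -> : (- t ^+ 2 != 1) = true.
  by apply/negP => /eqP h; move: t2; rewrite -h opprK eqxx.
have [H _] := fib_eval k t0.
rewrite /root -(mulIr_eq0 _ (mulIf tt0)) H subr_eq0 /=.
have tk0 : t ^+ k != 0 by rewrite expf_neq0.
rewrite -(inj_eq (mulIf tk0)).
have e1 : (- t^-1) ^+ k * t ^+ k = (-1) ^+ k by rewrite -exprMn mulNr mulVf.
have e2 : t ^+ k * t ^+ k = (t ^+ 2) ^+ k by rewrite -exprMn expr2.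
rewrite e1 e2 [in RHS]exprNn.
have h1 : (-1) ^+ k * (-1) ^+ k = 1 :> algC by rewrite -exprMn mulN1r opprK expr1n.
apply/idP/idP => /eqP h; apply/eqP; first by rewrite h h1.
by have := congr1 (fun y => (-1) ^+ k * y) h; rewrite /= mulrA h1 mul1r mulr1.
Qed.

Lemma prim_uniq (a b : nat) (u : algC) :
  a.-primitive_root u -> b.-primitive_root u -> a = b.
Proof.
move=> pa pb; apply/eqP; rewrite eqn_dvd.
by rewrite (prim_order_dvd pa) (prim_order_dvd pb) (prim_expr_order pa) (prim_expr_order pb) !eqxx.
Qed.

Lemma prim_exp_p (p d : nat) (w : algC) : prime p -> d.-primitive_root w ->
  (d %/ gcdn p d)%N.-primitive_root (w ^+ p).
Proof. by move=> _ pd; apply: exp_prim_root. Qed.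

Lemma prim_pow_p (p m : nat) (w : algC) : prime p -> (0 < m)%N ->
  m.-primitive_root (w ^+ p) = (p * m)%N.-primitive_root w || (~~ (p %| m)%N && m.-primitive_root w).
Proof.
move=> pp m0; have p0 := prime_gt0 pp.
apply/idP/idP.
  move=> pm.
  have wpm : w ^+ (p * m) = 1 by rewrite exprM (prim_expr_order pm).
  have pm0 : (0 < p * m)%N by rewrite muln_gt0 p0 m0.
  have [d pd dd] := @prim_order_exists _ (p * m)%N w pm0 wpm.
  have d0 := prim_order_gt0 pd.
  have := prim_exp_p pp pd; move/(prim_uniq pm) => e.
  case: (boolP (p %| d)%N) => pdv.
    have g : gcdn p d = p by apply/gcdn_idPl.
    rewrite g in e; have -> : (p * m = d)%N by rewrite e mulnC divnK.
    by rewrite pd.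
  have g : gcdn p d = 1%N.
    by apply/eqP; rewrite -/(coprime p d) prime_coprime.
  rewrite g divn1 in e; subst d; rewrite pdv pd /=.
  by rewrite orbT.
case/orP.
  move=> pw; have := prim_exp_p pp pw.
  have -> : gcdn p (p * m) = p by apply/gcdn_idPl; rewrite dvdn_mulr.
  by rewrite mulKn.
case/andP=> npm pw; have := prim_exp_p pp pw.
have -> : gcdn p m = 1%N by apply/eqP; rewrite -/(coprime p m) prime_coprime.
by rewrite divn1.
Qed.

Lemma prim1 (n : nat) : n.-primitive_root (1 : algC) -> n = 1%N.
Proof. move=> h; apply: (prim_uniq h); apply/andP; split => //; apply/forallP => -[[|i] //= _]; by rewrite unity_rootE expr1n eqxx.
Qed.

Lemma prim_pow_div (p m : nat) (w : algC) : prime p -> (0 < m)%N -> (p %| m)%N ->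
  m.-primitive_root (w ^+ p) = (p * m)%N.-primitive_root w.
Proof. by move=> pp m0 pm; rewrite prim_pow_p // pm /= orbF. Qed.

Lemma prim_pow_ndiv (p m : nat) (w : algC) : prime p -> (0 < m)%N -> ~~ (p %| m)%N ->
  m.-primitive_root (w ^+ p) = (p * m)%N.-primitive_root w || m.-primitive_root w.
Proof. by move=> pp m0 pm; rewrite prim_pow_p // pm. Qed.

Lemma prim_unity_p (p : nat) (w : algC) : prime p ->
  (w ^+ p == 1) = (w == 1) || p.-primitive_root w.
Proof.
move=> pp; have p0 := prime_gt0 pp.
apply/idP/idP.
  move/eqP=> h; have [d pd dd] := prim_order_exists p0 h.
  case/primeP: pp => _ /(_ d dd) /orP[] /eqP e; subst d.
    by have := prim_expr_order pd; rewrite expr1 => ->; rewrite eqxx.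
  by rewrite pd orbT.
case/orP => [/eqP -> | h]; first by rewrite expr1n.
by rewrite (prim_expr_order h).
Qed.

Lemma prim_neg (m : nat) (u : algC) : odd m ->
  (2 * m)%N.-primitive_root u = m.-primitive_root (- u).
Proof.
move=> om; have m0 : (0 < m)%N by case: m om.
have n2 : ~~ (2 %| m)%N by rewrite dvdn2 om.
have sq : (- u) ^+ 2 = u ^+ 2 by rewrite sqrrN.
have sgm : (-1) ^+ m = -1 :> algC by rewrite -signr_odd om expr1.
apply/idP/idP => h.
  have : m.-primitive_root ((- u) ^+ 2) by rewrite sq prim_pow_ndiv // h.
  rewrite prim_pow_ndiv // => /orP[h2|//].
  have um : u ^+ m = -1.
    have : (u ^+ m) ^+ 2 == 1 by rewrite -exprM mulnC (prim_expr_order h).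
    rewrite sqrf_eq1 => /orP[/eqP e|/eqP //].
    have := prim_order_dvd h m; rewrite e eqxx => /esym.
    by rewrite -{2}(mul1n m) dvdn_pmul2r // => /(dvdn_leq isT).
  have := prim_order_dvd h2 m.
  rewrite exprNn sgm um mulN1r opprK eqxx => /esym.
  by rewrite -{2}(mul1n m) dvdn_pmul2r // => /(dvdn_leq isT).
have : m.-primitive_root (u ^+ 2) by rewrite -sq prim_pow_ndiv // h orbT.
rewrite prim_pow_ndiv // => /orP[//|h2].
have := prim_expr_order h; rewrite exprNn sgm (prim_expr_order h2) mulr1.
by move/eqP; rewrite eq_sym -addr_eq0 -mulr2n pnatr_eq0.
Qed.

Definition zeta (n : nat) : algC := sval (C_prim_root_exists (ltn0Sn n.-1)).

Lemma zetaP n : (0 < n)%N -> n.-primitive_root (zeta n).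
Proof. by move=> n0; rewrite /zeta; case: C_prim_root_exists => z; rewrite prednK. Qed.

Definition Ul (n : nat) : seq algC :=
  [seq zeta n ^+ k | k <- [seq k <- iota 0 n | coprime k n]].

Lemma mem_Ul n u : (0 < n)%N -> (u \in Ul n) = n.-primitive_root u.
Proof.
move=> n0; have z := zetaP n0; apply/idP/idP.
  by case/mapP => k; rewrite mem_filter => /andP[ck _] ->; rewrite prim_root_exp_coprime.
move=> pu; have [i ei] := prim_rootP z (prim_expr_order pu).
apply/mapP; exists (nat_of_ord i) => //.
rewrite mem_filter mem_iota ltn_ord andbT /=.
by rewrite andbT -(prim_root_exp_coprime _ z) -ei.
Qed.

Lemma uniq_Ul n : uniq (Ul n).
Proof.
case: n => [|n] //; have z := zetaP (ltn0Sn n).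
rewrite map_inj_in_uniq ?filter_uniq ?iota_uniq // => i j.
rewrite !mem_filter !mem_iota /= => /andP[_ li] /andP[_ lj] /eqP.
by rewrite (eq_prim_root_expr z) !modn_small // => /eqP.
Qed.

Lemma size_Ul n : size (Ul n) = totient n.
Proof.
rewrite size_map size_filter totient_count_coprime -sum1_count big_mkcond /=.
rewrite /index_iota subn0; apply: eq_bigr => i _.
by rewrite coprime_sym; case: coprime.
Qed.

Lemma flat_fib (V : seq algC) (f : algC -> seq algC) (h : algC -> algC) (P : pred algC) :
  uniq V -> (forall v, v \in V -> uniq (f v)) ->
  (forall v w, v \in V -> (w \in f v) = P w && (h w == v)) ->
  uniq (flatten (map f V)) /\ (forall w, (w \in flatten (map f V)) = P w && (h w \in V)).
Proof.
elim: V => [|v V IH] /=; first by move=> *; split => // w; rewrite andbF.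
move=> /andP[vV uV] uf mf.
have [IH1 IH2] : uniq (flatten (map f V)) /\
   (forall w, (w \in flatten (map f V)) = P w && (h w \in V)).
  apply: IH => // [v' v'V|v' w v'V]; [apply: uf | apply: mf]; by rewrite inE v'V orbT.
split => [|w]; last by rewrite mem_cat IH2 mf ?inE ?eqxx // -andb_orr.
rewrite cat_uniq IH1 uf ?inE ?eqxx // andbT /=.
apply/hasPn => w /[dup] wV; rewrite IH2 => /andP[_ hw].
rewrite mf ?inE ?eqxx //; apply/negP => /andP[_ /eqP e].
by move: vV; rewrite -e hw.
Qed.

Lemma size_flat (V : seq algC) (f : algC -> seq algC) k :
  (forall v, v \in V -> size (f v) = k) -> size (flatten (map f V)) = (k * size V)%N.
Proof.
elim: V => [|v V IH] /= h; first by rewrite muln0.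
rewrite size_cat h ?inE ?eqxx // IH ?mulnS // => v' v'V.
by apply: h; rewrite inE v'V orbT.
Qed.

Lemma big_flat (V : seq algC) (f : algC -> seq algC) (g : algC -> algC) :
  \prod_(w <- flatten (map f V)) g w = \prod_(v <- V) \prod_(w <- f v) g w.
Proof. by rewrite big_flatten big_map. Qed.

Lemma prod_cmul (I : Type) (s : seq I) (F : I -> algC) c :
  \prod_(i <- s) (F i * c) = \prod_(i <- s) F i * c ^+ size s.
Proof.
elim: s => [|a s IH]; first by rewrite !big_nil mul1r.
by rewrite !big_cons IH exprS /=; ring.
Qed.

Lemma prod_opp (I : Type) (s : seq I) (F : I -> algC) :
  \prod_(i <- s) (- F i) = (-1) ^+ size s * \prod_(i <- s) F i.
Proof.
elim: s => [|a s IH]; first by rewrite !big_nil mul1r.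
by rewrite !big_cons IH exprS /=; ring.
Qed.

Definition Sl n := [seq z <- undup (fibroots n) |
   all (fun k => ~~ root (fibpoly k) z) (iota 1 n.-1)].

Lemma fibotomicE n : n != 1%N -> fibotomic n = \prod_(z <- Sl n) ('X - z%:P).
Proof. by move=> n1; rewrite /fibotomic (negPf n1) big_filter. Qed.

Lemma fibpoly_neq0 k : (0 < k)%N -> fibpoly k != 0.
Proof.
move=> k0; have [H _] := fib_eval_i k (@sqrCi algC).
apply/negP => /eqP e; move: H; rewrite /fibpoly in e; rewrite e horner0 mul0r => /esym/eqP.
rewrite mulf_eq0 expf_eq0 (negPf (@neq0Ci algC)) andbF orbF pnatr_eq0 => /eqP k00.
by rewrite k00 in k0.
Qed.

Lemma mem_fibroots k z : (0 < k)%N -> (z \in fibroots k) = root (fibpoly k) z.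
Proof.
move=> k0; rewrite /fibroots; case: closed_field_poly_normal => r /= e.
by rewrite -root_prod_XsubC [in RHS]e rootZ // lead_coef_eq0 fibpoly_neq0.
Qed.

Lemma mem_Sl n t : (2 <= n)%N -> t != 0 ->
  (t - t^-1 \in Sl n) = n.-primitive_root (- t ^+ 2).
Proof.
move=> n2 t0; have n0 : (0 < n)%N by apply: leq_trans n2.
rewrite mem_filter mem_undup mem_fibroots // fib_root //.
set u := - t ^+ 2; apply/idP/idP.
  case/andP => /allP Ha /andP[u1 un].
  have [d pd dd] := prim_order_exists n0 (eqP un).
  suff e : d = n by rewrite -e.
  have d0 := prim_order_gt0 pd.
  have := dvdn_leq n0 dd; rewrite leq_eqVlt => /orP[/eqP //|dn].
  have := Ha d; rewrite mem_iota d0 add1n prednK // dn => /(_ isT).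
  by rewrite fib_root // u1 (prim_expr_order pd) eqxx.
move=> pu; have u1 : u != 1.
  by apply/negP => /eqP e; move: pu; rewrite e => /prim1 e1; rewrite e1 in n2.
rewrite u1 (prim_expr_order pu) eqxx !andbT.
apply/allP => k; rewrite mem_iota add1n prednK // => /andP[k1 kn].
rewrite fib_root // u1 /= -(prim_order_dvd pu).
by apply/negP => /(dvdn_leq k1); rewrite leqNgt kn.
Qed.

Definition qa (z : algC) := (z + sqrtC (z ^+ 2 + 4)) / 2.
Definition qb (z : algC) := (z - sqrtC (z ^+ 2 + 4)) / 2.

Lemma two_neq0 : (2 : algC) != 0. Proof. by rewrite pnatr_eq0. Qed.

Lemma qab t z : (t - qa z) * (t - qb z) = t ^+ 2 - z * t - 1.
Proof.
rewrite /qa /qb; set d := sqrtC _.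
have dd : d ^+ 2 = z ^+ 2 + 4 by rewrite sqrtCK.
have h2 := two_neq0.
transitivity (t ^+ 2 - z * t + (z ^+ 2 - d ^+ 2) / 4); first by field.
by rewrite dd; field.
Qed.

Definition f1 (z : algC) := [:: qa z; qb z].

Lemma mem_f1 z t : (t \in f1 z) = (t != 0) && (t - t^-1 == z).
Proof.
rewrite !inE -(subr_eq0 t (qa z)) -(subr_eq0 t (qb z)) -mulf_eq0 qab.
case: (eqVneq t 0) => [->|t0] /=; first by rewrite expr0n /= mulr0 subrr sub0r oppr_eq0 oner_eq0.
have -> : t ^+ 2 - z * t - 1 = t * (t - t^-1 - z).
  by rewrite !mulrBr divff // expr2; ring.
by rewrite mulf_eq0 (negPf t0) subr_eq0.
Qed.

Definition f2 (u : algC) := [:: sqrtC (- u); - sqrtC (- u)].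

Lemma mem_f2 u t : (t \in f2 u) = true && (- t ^+ 2 == u).
Proof. by rewrite !inE -eqf_sqr sqrtCK eqr_oppLR. Qed.

Lemma uniq_f2 u : u != 0 -> uniq (f2 u).
Proof.
move=> u0; rewrite /= inE andbT eq_sym eqNr sqrtC_eq0 oppr_eq0 //.
Qed.

Lemma uniq_f1 n z : (2 <= n)%N -> z \in Sl n -> uniq (f1 z).
Proof.
move=> n2 zS; rewrite /= inE andbT; apply/negP => /eqP e.
have ab : qa z * qb z = -1.
  by have := qab 0 z; rewrite !sub0r mulrNN expr0n /= mulr0 subrr sub0r.
have a0 : qa z != 0 by apply/negP => /eqP a0; move: ab; rewrite a0 mul0r => /eqP; rewrite eq_sym oppr_eq0 oner_eq0.
have : qa z \in f1 z by rewrite inE eqxx.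
rewrite mem_f1 => /andP[_ /eqP ez].
have a2 : qa z ^+ 2 = -1 by rewrite expr2 {2}e ab.
move: zS; rewrite -ez mem_Sl // a2 opprK => /prim1 e1; by rewrite e1 in n2.
Qed.

Lemma lemA n t : (2 <= n)%N -> t != 0 ->
  (fibotomic n).[t - t^-1] * t ^+ size (Ul n) = \prod_(u <- Ul n) (t ^+ 2 + u)
  /\ size (Sl n) = size (Ul n).
Proof.
move=> n2 t0; have n0 : (0 < n)%N by apply: leq_trans n2.
have [U1 M1] := @flat_fib (Sl n) f1 (fun t => t - t^-1) (fun t => t != 0)
  (filter_uniq _ (undup_uniq _)) (fun z zS => uniq_f1 n2 zS) (fun z w _ => mem_f1 z w).
have Unz : forall u, u \in Ul n -> uniq (f2 u).
  by move=> u; rewrite mem_Ul // => pu; apply: uniq_f2; rewrite (prim_root_eq0 pu) -lt0n n0.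
have [U2 M2] := @flat_fib (Ul n) f2 (fun t => - t ^+ 2) predT
  (uniq_Ul n) Unz (fun u w _ => mem_f2 u w).
have P12 : perm_eq (flatten (map f1 (Sl n))) (flatten (map f2 (Ul n))).
  apply: uniq_perm => // w; rewrite M1 M2 /=.
  case: (eqVneq w 0) => [->|w0] /=.
    rewrite mem_Ul // expr0n /= oppr0; apply/esym/negP => h.
    by have := prim_root_eq0 h; rewrite eqxx => /esym/eqP n00; rewrite n00 in n0.
  by rewrite mem_Sl // mem_Ul.
have sz : size (Sl n) = size (Ul n).
  have := perm_size P12; rewrite (@size_flat _ _ 2) ?(@size_flat _ _ 2) //.
  by move/eqP; rewrite eqn_pmul2l // => /eqP.
split => //.
rewrite fibotomicE; last by rewrite neq_ltn n2 orbT.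
rewrite horner_prod -sz -prod_cmul.
transitivity (\prod_(z <- Sl n) \prod_(w <- f1 z) (t - w)).
  apply: eq_bigr => z _; rewrite hornerXsubC /= big_cons big_cons big_nil mulr1 qab.
  by rewrite mulrBl mulrBl mulVf // expr2; ring.
rewrite -big_flat (perm_big _ P12) big_flat; apply: eq_bigr => u _.
rewrite /= big_cons big_cons big_nil mulr1 opprK.
by rewrite -subr_sqr sqrtCK opprK.
Qed.

Definition f3 (p : nat) (v : algC) := [seq p.-root v * zeta p ^+ k | k <- iota 0 p].

Section F3.
Variables (p : nat) (v : algC).
Hypotheses (pp : prime p) (v0 : v != 0).
Let p0 := prime_gt0 pp.
Let z := zetaP p0.
Let r := p.-root v.
Let rp : r ^+ p = v. Proof. exact: rootCK. Qed.
Let r0 : r != 0.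
Proof. apply/negP => /eqP e; move/negP: v0; apply; by rewrite -rp e expr0n eqn0Ngt p0. Qed.

Lemma mem_f3 w : (w \in f3 p v) = true && (w ^+ p == v).
Proof.
apply/idP/idP.
  case/mapP => k _ ->; rewrite exprMn -/r rp -exprM mulnC exprM (prim_expr_order z).
  by rewrite expr1n mulr1 /=.
move=> /eqP wp; have : (w / r) ^+ p = 1 by rewrite expr_div_n wp -rp divff // rp.
move/(prim_rootP z) => [i ei]; apply/mapP; exists (nat_of_ord i).
  by rewrite mem_iota ltn_ord.
by rewrite -ei -/r mulrC divfK.
Qed.

Lemma uniq_f3 : uniq (f3 p v).
Proof.
rewrite map_inj_in_uniq ?iota_uniq // => i j; rewrite !mem_iota /= => li lj.
move/(mulfI r0)/eqP; rewrite (eq_prim_root_expr z) !modn_small //.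
by move/eqP.
Qed.

Lemma size_f3 : size (f3 p v) = p.
Proof. by rewrite size_map size_iota. Qed.

Lemma prod_f3 y : \prod_(w <- f3 p v) (y - w) = y ^+ p - v.
Proof.
have F := congr1 (fun q => q.[y / r]) (factor_Xn_sub_1 z).
rewrite /= horner_prod hornerD hornerN hornerXn hornerC in F.
rewrite big_map.
transitivity (\prod_(k <- iota 0 p) ((y / r - zeta p ^+ k) * r)).
  by apply: eq_bigr => k _; rewrite mulrBl divfK // mulrC.
rewrite prod_cmul size_iota.
have -> : \prod_(k <- iota 0 p) (y / r - zeta p ^+ k) = (y / r) ^+ p - 1.
  by rewrite -F /index_iota subn0; apply: eq_bigr => k _; rewrite hornerXsubC.
by rewrite mulrBl -exprMn divfK // mul1r rp.
Qed.

Lemma prod_f3' y : \prod_(w <- f3 p v) (y + w) = y ^+ p - (-1) ^+ p * v.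
Proof.
have := prod_f3 (- y).
have -> : \prod_(w <- f3 p v) (- y - w) = \prod_(w <- f3 p v) (- (y + w)).
  by apply: eq_bigr => w _; rewrite opprD.
rewrite prod_opp size_f3 => h.
have s1 : (-1) ^+ p * (-1) ^+ p = 1 :> algC by rewrite -exprMn mulN1r opprK expr1n.
have := congr1 (fun q => (-1) ^+ p * q) h; rewrite /= mulrA s1 mul1r => ->.
by rewrite mulrBr [(- y) ^+ p]exprNn mulrA s1 mul1r.
Qed.

End F3.

Lemma Ul_neq0 m u : (0 < m)%N -> u \in Ul m -> u != 0.
Proof.
move=> m0; rewrite mem_Ul // => pu; apply/negP => /eqP e.
by have := prim_root_eq0 pu; rewrite e eqxx => /esym/eqP m00; rewrite m00 in m0.
Qed.

Lemma PF p m y : prime p -> (0 < m)%N ->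
  let W := flatten (map (f3 p) (Ul m)) in
  [/\ uniq W, (forall w, (w \in W) = (w ^+ p \in Ul m)),
      \prod_(v <- Ul m) (y ^+ p - (-1) ^+ p * v) = \prod_(w <- W) (y + w)
    & size W = (p * size (Ul m))%N].
Proof.
move=> pp m0 W.
have [U1 M1] := @flat_fib (Ul m) (f3 p) (fun w => w ^+ p) predT (uniq_Ul m)
  (fun v vU => uniq_f3 pp (Ul_neq0 m0 vU)) (fun v w vU => mem_f3 pp (Ul_neq0 m0 vU) w).
split => //.
- by rewrite big_flat; apply: eq_big_seq => v vU; rewrite (prod_f3' pp (Ul_neq0 m0 vU)).
- by rewrite (@size_flat _ _ p) // => v vU; rewrite size_f3.
Qed.

Lemma Pdiv p m y : prime p -> (0 < m)%N -> (p %| m)%N ->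
  \prod_(v <- Ul m) (y ^+ p - (-1) ^+ p * v) = \prod_(u <- Ul (p * m)) (y + u)
  /\ size (Ul (p * m)) = (p * size (Ul m))%N.
Proof.
move=> pp m0 pm; have [U1 M1 P1 S1] := PF y pp m0.
have pm0 : (0 < p * m)%N by rewrite muln_gt0 prime_gt0.
have e : perm_eq (flatten (map (f3 p) (Ul m))) (Ul (p * m)).
  by apply: uniq_perm => // [|w]; rewrite ?uniq_Ul // M1 !mem_Ul // prim_pow_div.
by rewrite P1 (perm_big _ e) -(perm_size e) S1.
Qed.

Lemma Pndiv p m y : prime p -> (0 < m)%N -> ~~ (p %| m)%N ->
  \prod_(v <- Ul m) (y ^+ p - (-1) ^+ p * v)
    = \prod_(u <- Ul (p * m)) (y + u) * \prod_(u <- Ul m) (y + u)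
  /\ (size (Ul (p * m)) + size (Ul m) = p * size (Ul m))%N.
Proof.
move=> pp m0 pm; have [U1 M1 P1 S1] := PF y pp m0.
have pm0 : (0 < p * m)%N by rewrite muln_gt0 prime_gt0.
have e : perm_eq (flatten (map (f3 p) (Ul m))) (Ul (p * m) ++ Ul m).
  apply: uniq_perm => // [|w]; last by rewrite M1 mem_cat !mem_Ul // prim_pow_ndiv.
  rewrite cat_uniq !uniq_Ul andbT /=; apply/hasPn => w; rewrite !mem_Ul //.
  move=> h1; apply/negP => h2; have := prim_uniq h1 h2.
  move/eqP; rewrite -{1}(mul1n m) eqn_pmul2r // => /eqP p1.
  by move: pp; rewrite -p1.
by rewrite P1 (perm_big _ e) big_cat -size_cat -(perm_size e) S1.
Qed.

Lemma Pneg m (F : algC -> algC) : odd m ->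
  \prod_(u <- Ul (2 * m)) F u = \prod_(v <- Ul m) F (- v)
  /\ size (Ul (2 * m)) = size (Ul m).
Proof.
move=> om; have m0 : (0 < m)%N by case: m om.
have e : perm_eq (Ul (2 * m)) (map -%R (Ul m)).
  apply: uniq_perm; first exact: uniq_Ul.
    by rewrite (map_inj_uniq oppr_inj) uniq_Ul.
  move=> u; rewrite -{2}[u]opprK mem_map; last exact: oppr_inj.
  by rewrite !mem_Ul ?muln_gt0 // prim_neg.
by rewrite (perm_big _ e) big_map (perm_size e) size_map.
Qed.

Lemma Punity p y : prime p ->
  (y - 1) * \prod_(u <- Ul p) (y - u) = y ^+ p - 1 /\ size (Ul p) = p.-1.
Proof.
move=> pp; have p0 := prime_gt0 pp.
have e : perm_eq (f3 p 1) (1 :: Ul p).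
  apply: uniq_perm; rewrite ?uniq_f3 ?oner_neq0 //=.
    rewrite uniq_Ul andbT mem_Ul //; apply/negP => /prim1 p1.
    by move: pp; rewrite p1.
  by move=> w; rewrite mem_f3 ?oner_neq0 // inE prim_unity_p // mem_Ul.
split.
  by rewrite -(prod_f3 pp (oner_neq0 _)) (perm_big _ e) big_cons.
by have := perm_size e; rewrite size_f3 /= => h; rewrite [in RHS]h.
Qed.

Section TotEven.
Local Open Scope nat_scope.

Lemma tot_oddp m q : (0 < m) -> prime q -> odd q -> q %| m -> ~~ odd (totient m).
Proof.
move=> m0 qp qo qm; have qP : q \in primes m by rewrite mem_primes qp m0 qm.
rewrite totientE // (big_rem _ qP) /= !oddM.
have : ~~ odd q.-1 by case: q qo {qp qm qP} => //= q; rewrite negbK.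
by move/negPf => ->.
Qed.

Lemma tot_4 m : (0 < m) -> 4 %| m -> ~~ odd (totient m).
Proof.
move=> m0 fm; have qP : 2 \in primes m.
  by rewrite mem_primes m0 /=; apply: dvdn_trans fm.
have l2 : 2 <= logn 2 m by rewrite -pfactor_dvdn.
rewrite totientE // (big_rem _ qP) /= !oddM oddX.
by case: (logn 2 m) l2 => [|[|l]].
Qed.

Lemma odd_pdiv n : 1 < n -> ~~ (2 %| n) -> odd (pdiv n).
Proof.
move=> n1 n2; apply/negP => /negP; rewrite -dvdn2 => d2.
by move: n2; rewrite (dvdn_trans d2 (pdiv_dvd n)).
Qed.

Lemma totient_even m : 2 < m -> ~~ odd (totient m).
Proof.
move=> m2; have m0 : 0 < m by apply: leq_trans m2.
case: (boolP (2 %| m)) => em; last first.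
  have q1 : 1 < m by apply: ltn_trans m2.
  exact: (tot_oddp m0 (pdiv_prime q1) (odd_pdiv q1 em) (pdiv_dvd m)).
case: (boolP (4 %| m)) => fm; first exact: tot_4.
set h := m %/ 2; have mh : m = h * 2 by rewrite divnK.
have h2 : ~~ (2 %| h).
  by apply/negP => d; move: fm; rewrite mh (@dvdn_mul 2 2) ?dvdnn.
have h1 : 1 < h by move: m2; rewrite mh; lia.
apply: (tot_oddp m0 (pdiv_prime h1) (odd_pdiv h1 h2)).
by rewrite mh; apply: dvdn_trans (pdiv_dvd h) (dvdn_mulr _ _).
Qed.
End TotEven.


Lemma sgn_odd p : odd p -> (-1) ^+ p = -1 :> algC.
Proof. by move=> op; rewrite -signr_odd op expr1. Qed.

Lemma sgn_even p : ~~ odd p -> (-1) ^+ p = 1 :> algC.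
Proof. by move=> op; rewrite -signr_odd (negPf op) expr0. Qed.

Lemma partC p m w : prime p -> (2 < p)%N -> (p %| m)%N -> (2 <= m)%N -> w != 0 ->
  (fibotomic (p * m)).[w - w^-1] = (fibotomic m).[w ^+ p - w ^- p].
Proof.
move=> pp p2 pm m2 w0; have m0 : (0 < m)%N by apply: leq_trans m2.
have op : odd p by case: (even_prime pp) => // e; rewrite e in p2.
have pm2 : (2 <= p * m)%N by rewrite (leq_trans m2) // leq_pmull // prime_gt0.
have wp0 : w ^+ p != 0 by rewrite expf_neq0.
have [A1 _] := lemA pm2 w0.
have [A2 _] := lemA m2 wp0.
have [P1 S1] := Pdiv (w ^+ 2) pp m0 pm.
rewrite sgn_odd // in P1.
have : (fibotomic (p * m)).[w - w^-1] * w ^+ (p * size (Ul m))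
     = (fibotomic m).[w ^+ p - w ^- p] * w ^+ (p * size (Ul m)).
  rewrite -{1}S1 A1 -P1 exprM A2; apply: eq_bigr => v _.
  by rewrite mulN1r opprK -!exprM mulnC.
by move/(mulIf (expf_neq0 _ w0)).
Qed.

Lemma L2p p w : prime p -> (2 < p)%N -> w != 0 ->
  (w - w^-1) * (fibotomic (2 * p)).[w - w^-1] = w ^+ p - w ^- p.
Proof.
move=> pp p2 w0; have op : odd p by case: (even_prime pp) => // e; rewrite e in p2.
have p2' : (2 <= 2 * p)%N by rewrite leq_pmulr // prime_gt0.
have [A1 _] := lemA p2' w0.
have [N1 N2] := Pneg (fun u => w ^+ 2 + u) op.
have [U1 U2] := Punity (w ^+ 2) pp.
have wp0 : w ^+ p != 0 by rewrite expf_neq0.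
apply: (mulIf wp0).
rewrite [RHS]mulrBl mulVf // -exprMn -expr2 -U1.
have hp : p = (size (Ul (2 * p))).+1 by rewrite N2 U2 prednK // prime_gt0.
have -> : w ^+ p = w ^+ (size (Ul (2 * p))) * w by rewrite {1}hp exprSr.
rewrite -mulrA (mulrA _ _ w) (mulrC _ w) mulrA A1 N1.
congr (_ * _).
by rewrite mulrBl mulVf // expr2.
Qed.

Lemma partD p m w : prime p -> (2 < p)%N -> ~~ (p %| m)%N -> (2 <= m)%N -> w != 0 ->
  (fibotomic m).[w - w^-1] != 0 ->
  (fibotomic (p * m)).[w - w^-1]
    = (fibotomic m).[w ^+ p - w ^- p] / (fibotomic m).[w - w^-1].
Proof.
move=> pp p2 pm m2 w0 nz; have m0 : (0 < m)%N by apply: leq_trans m2.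
have op : odd p by case: (even_prime pp) => // e; rewrite e in p2.
have pm2 : (2 <= p * m)%N by rewrite (leq_trans m2) // leq_pmull // prime_gt0.
have wp0 : w ^+ p != 0 by rewrite expf_neq0.
have [A1 _] := lemA pm2 w0.
have [A2 _] := lemA m2 wp0.
have [A3 _] := lemA m2 w0.
have [P1 S1] := Pndiv (w ^+ 2) pp m0 pm.
rewrite sgn_odd // in P1.
apply: (mulIf nz); rewrite divfK //.
have : (fibotomic (p * m)).[w - w^-1] * (fibotomic m).[w - w^-1] * w ^+ (p * size (Ul m))
     = (fibotomic m).[w ^+ p - w ^- p] * w ^+ (p * size (Ul m)).
  rewrite -{1}S1 exprD mulrACA A1 A3 -P1 exprM A2; apply: eq_bigr => v _.
  by rewrite mulN1r opprK -!exprM mulnC.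
by move/(mulIf (expf_neq0 _ w0)).
Qed.

Lemma i2 : 'i ^+ 2 = -1 :> algC. Proof. exact: sqrCi. Qed.

Lemma partA m w : (2 %| m)%N -> (2 <= m)%N -> w != 0 ->
  (fibotomic (2 * m)).[w - w^-1]
    = (-1) ^+ totient m * 'i ^+ totient m * (fibotomic m).['i * w ^+ 2 - ('i * w ^+ 2)^-1].
Proof.
move=> dm m2 w0; have m0 : (0 < m)%N by apply: leq_trans m2.
have m2' : (2 <= 2 * m)%N by rewrite leq_pmulr.
have t0 : 'i * w ^+ 2 != 0 by rewrite mulf_neq0 ?neq0Ci ?expf_neq0.
have [A1 _] := lemA m2' w0.
have [A4 _] := lemA m2 t0.
have [P1 S1] := Pdiv (w ^+ 2) (pdiv_prime (isT : (1 < 2)%N)) m0 dm.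
have e2 : (-1) ^+ 2 = 1 :> algC by rewrite sqrrN expr1n.
rewrite /= e2 in P1.
rewrite -size_Ul; set phi := size (Ul m).
have s1 : (-1) ^+ phi * (-1) ^+ phi = 1 :> algC by rewrite -exprMn mulN1r opprK expr1n.
apply: (mulIf (expf_neq0 (2 * phi) w0)).
rewrite -{1}S1 A1 -P1.
transitivity ((-1) ^+ phi * ((fibotomic m).['i * w ^+ 2 - ('i * w ^+ 2)^-1] * ('i * w ^+ 2) ^+ phi)).
  rewrite A4.
  have -> : \prod_(u <- Ul m) (('i * w ^+ 2) ^+ 2 + u)
      = \prod_(u <- Ul m) (- ((w ^+ 2) ^+ 2 - u)).
    by apply: eq_bigr => u _; rewrite exprMn i2 mulN1r opprB addrC.
  rewrite prod_opp -/phi mulrA s1 mul1r; apply: eq_bigr => u _.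
  by rewrite mul1r.
by rewrite exprMn exprM; ring.
Qed.

Lemma partB m w : odd m -> (2 <= m)%N -> w != 0 ->
  (fibotomic (2 * m)).[w - w^-1] = 'i ^+ totient m * (fibotomic m).['i * w - ('i * w)^-1].
Proof.
move=> om m2 w0; have m0 : (0 < m)%N by apply: leq_trans m2.
have m3 : (2 < m)%N by case: m om m2 {m0} => [|[|[|m]]].
have m2' : (2 <= 2 * m)%N by rewrite leq_pmulr.
have t0 : 'i * w != 0 by rewrite mulf_neq0 ?neq0Ci.
have [A1 _] := lemA m2' w0.
have [A4 _] := lemA m2 t0.
have [N1 N2] := Pneg (fun u => w ^+ 2 + u) om.
have ev := sgn_even (totient_even m3).
rewrite -size_Ul in ev *; set phi := size (Ul m).
apply: (mulIf (expf_neq0 phi w0)).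
rewrite [in LHS]/phi -N2 A1 N1.
transitivity ((fibotomic m).['i * w - ('i * w)^-1] * ('i * w) ^+ phi); last first.
  by rewrite exprMn; ring.
rewrite A4.
have -> : \prod_(u <- Ul m) (('i * w) ^+ 2 + u) = \prod_(u <- Ul m) (- (w ^+ 2 - u)).
  by apply: eq_bigr => u _; rewrite exprMn i2 mulN1r opprB addrC.
by rewrite prod_opp -/phi ev mul1r.
Qed.

Unset Implicit Arguments.


Lemma wfacts (x : algC) : let s := sqrtC (x ^+ 2 + 4) in let w := (x + s) / 2 in
  [/\ w != 0, w - w^-1 = x & w + w^-1 = s].
Proof.
move=> s w; have ss : s ^+ 2 = x ^+ 2 + 4 by rewrite sqrtCK.
have h2 := two_neq0.
have h4 : (4 : algC) != 0 by rewrite pnatr_eq0.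
have wq : w * ((s - x) / 2) = 1.
  rewrite /w; transitivity ((s ^+ 2 - x ^+ 2) / 4); first by field.
  by rewrite ss addrC addKr divff.
have w0 : w != 0 by apply/negP => /eqP e; move: wq; rewrite e mul0r => /eqP; rewrite eq_sym oner_eq0.
have wi : w^-1 = (s - x) / 2 by apply: (mulfI w0); rewrite divff // wq.
by split => //; rewrite wi /w; field.
Qed.

Theorem mainTheorem6 (p m : nat) (x : algC) :
  prime p -> (2 <= m)%N -> x \is Num.real ->
  let w := (x + sqrtC (x ^+ 2 + 4)) / 2 in
  [/\
   (* (a) *)
   (p = 2%N -> (2 %| m)%N ->
      (m = 2%N ->
         (fibotomic (p * m)).[x]
           = - 'i ^+ totient m * (fibotomic m).['i * w ^+ 2 - ('i * w ^+ 2)^-1]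
         /\ (fibotomic (p * m)).[x]
           = - 'i ^+ totient m * (fibotomic m).['i * (x ^+ 2 + 2)])
      /\
      ((3 <= m)%N ->
         (fibotomic (p * m)).[x]
           = 'i ^+ totient m * (fibotomic m).['i * w ^+ 2 - ('i * w ^+ 2)^-1]
         /\ (fibotomic (p * m)).[x]
           = 'i ^+ totient m * (fibotomic m).['i * (x ^+ 2 + 2)])),
   (* (b) *)
   (p = 2%N -> ~~ (2 %| m)%N ->
      (fibotomic (p * m)).[x]
        = 'i ^+ totient m * (fibotomic m).['i * w - ('i * w)^-1]
      /\ (fibotomic (p * m)).[x]
        = 'i ^+ totient m * (fibotomic m).['i * sqrtC (x ^+ 2 + 4)]),
   (* (c) *)
   ((2 < p)%N -> (p %| m)%N ->
      (fibotomic (p * m)).[x] = (fibotomic m).[w ^+ p - w ^- p]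
      /\ (fibotomic (p * m)).[x] = (fibotomic m).[x * (fibotomic (2 * p)).[x]])
   &
   (* (d) *)
   ((2 < p)%N -> ~~ (p %| m)%N -> (fibotomic m).[x] != 0 ->
      (fibotomic (p * m)).[x]
        = (fibotomic m).[w ^+ p - w ^- p] / (fibotomic m).[w - w^-1]
      /\ (fibotomic (p * m)).[x]
        = (fibotomic m).[x * (fibotomic (2 * p)).[x]] / (fibotomic m).[x])].
Proof.
move=> pp m2 _ w; have [w0 wx ws] := wfacts x.
rewrite -/w in w0 wx ws.
have iw2 : 'i * w ^+ 2 - ('i * w ^+ 2)^-1 = 'i * (x ^+ 2 + 2).
  by rewrite -wx invfM invCi; field.
have iw : 'i * w - ('i * w)^-1 = 'i * sqrtC (x ^+ 2 + 4).
  by rewrite -ws invfM invCi; field.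
split.
- move=> p2 dm; subst p; have := partA dm m2 w0; rewrite wx => H.
  split.
    move=> m2e; subst m; rewrite H (totient_prime (isT : prime 2)) expr1 mulN1r.
    by rewrite -iw2.
  move=> m3; rewrite H sgn_even ?mul1r ?totient_even //.
  by rewrite -iw2.
- move=> p2 dm; subst p.
  have om : odd m by move: dm; rewrite dvdn2 negbK.
  have := partB om m2 w0; rewrite wx => H.
  by rewrite H -iw.
- move=> p2 pm; have := partC pp p2 pm m2 w0; rewrite wx => H.
  by rewrite H -(L2p pp p2 w0) wx.
- move=> p2 pm nz; have := partD pp p2 pm m2 w0; rewrite wx => H.
  by rewrite H // -(L2p pp p2 w0) wx.
Qed.
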